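(* Let $\mathcal{U}$ be a universe of $n$ element types with frequencies $f:\mathcal{U}\to\{1,2,\dots\}$ and total $N=\sum_{e\in\mathcal{U}}f(e)$. Let $\mathcal{G}=\{\mathbf{g}_1,\dots,\mathbf{g}_\ell\}$, $\ell\ge 2$, be a partition of $\mathcal{U}$ into nonempty groups with $n_j=|\mathbf{g}_j|$ and $N_j=\sum_{e\in\mathbf{g}_j}f(e)$. Let $w$ be a positive integer such that each $w_j=\frac{n_j}{n}w$ is a positive integer. Consider (i) the standard one-row Count-Min sketch (CM), in which each element type is hashed independently and uniformly at random into $w$ bins, and (ii) the one-row Fair-Count-Min sketch (FCM), in which the $w$ bins are split into disjoint blocks of sizes $w_1,\dots,w_\ell$ and each element type of $\mathbf{g}_j$ is hashed independently and uniformly at random into block $j$. Then $\mathcal{L}_{FCM}<\mathcal{L}_{CM}$, i.e. the price of fairness $\mathcal{L}_{FCM}-\mathcal{L}_{CM}$ is negative.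
   Context: In a one-row sketch with hash $\mathsf{h}$, the estimate of $e$ is $\hat f(e)=\sum_{e':\mathsf{h}(e')=\mathsf{h}(e)}f(e')$ and its additive error is $\varepsilon_A(e)=\hat f(e)-f(e)=\sum_{e'\neq e:\mathsf{h}(e')=\mathsf{h}(e)}f(e')$. The total expected additive error of a sketch is $\mathcal{L}=\sum_{e\in\mathcal{U}}\mathbb{E}[\varepsilon_A(e)]$, expectation over the random hash. The price of fairness is $\mathcal{L}_{FCM}-\mathcal{L}_{CM}$. *)

(* Defs.v *)
From mathcomp Require Import all_boot all_order all_algebra.
Set Implicit Arguments. Unset Strict Implicit. Unset Printing Implicit Defensive.
Import Order.TTheory GRing.Theory Num.Theory.
Local Open Scope ring_scope.

(* A hash function is an element of {ffun U -> 'I_w}; a (uniformly random)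
   hash family is a finite set H of such functions, drawn uniformly. *)

Definition add_err (U : finType) (w : nat) (f : U -> nat)
  (h : {ffun U -> 'I_w}) (e : U) : rat :=
  (\sum_(e' : U | (e' != e) && (h e' == h e)) f e')%N%:R.

Definition exp_err (U : finType) (w : nat) (f : U -> nat)
  (H : {set {ffun U -> 'I_w}}) (e : U) : rat :=
  (#|H|%:R)^-1 * \sum_(h in H) add_err f h e.

Definition total_loss (U : finType) (w : nat) (f : U -> nat)
  (H : {set {ffun U -> 'I_w}}) : rat :=
  \sum_(e : U) exp_err f H e.

(* Count-Min: every element hashed independently and uniformly into all w bins,
   i.e. h uniform over all functions U -> 'I_w *)
Definition CM_hashes (U : finType) (w : nat) : {set {ffun U -> 'I_w}} :=
  [set: {ffun U -> 'I_w}].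

(* group partition given by a labelling g : U -> 'I_l; block of group j is
   the bin interval [offset j, offset j + wj j), offset j = sum_{k<j} wj k *)
Definition block_offset (l : nat) (wj : 'I_l -> nat) (j : 'I_l) : nat :=
  (\sum_(k < l | (k < j)%N) wj k)%N.

Definition in_block (l w : nat) (wj : 'I_l -> nat) (j : 'I_l) (b : 'I_w) : bool :=
  (block_offset wj j <= b < block_offset wj j + wj j)%N.

Definition FCM_hashes (U : finType) (l w : nat) (g : U -> 'I_l)
  (wj : 'I_l -> nat) : {set {ffun U -> 'I_w}} :=
  [set h : {ffun U -> 'I_w} | [forall e : U, in_block wj (g e) (h e)]].

Definition group_size (U : finType) (l : nat) (g : U -> 'I_l) (j : 'I_l) : nat :=
  #|[set e : U | g e == j]|.

(* Main.v *)
Require Import Defs.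
From mathcomp Require Import all_boot all_order all_algebra.
From mathcomp Require Import zify ring lra.
Set Implicit Arguments. Unset Strict Implicit. Unset Printing Implicit Defensive.
Import Order.TTheory GRing.Theory Num.Theory.
Local Open Scope ring_scope.

Lemma card_bij (T : finType) (A B : {set T}) (f g : T -> T) :
 {in A, cancel f g} -> {in B, cancel g f} -> {in A, forall x, f x \in B} ->
 {in B, forall x, g x \in A} -> #|A| = #|B|.
Proof.
move=> fK gK fA gB; apply/eqP; rewrite eqn_leq; apply/andP; split.
- rewrite -(card_in_imset (can_in_inj fK)); apply: subset_leq_card.
  by apply/subsetP => y /imsetP [x xA ->]; exact: fA.
- rewrite -(card_in_imset (can_in_inj gK)); apply: subset_leq_card.
  by apply/subsetP => y /imsetP [x xA ->]; exact: gB.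
Qed.

Section Coll.
Variables (U : finType) (w : nat).
Definition upd (h : {ffun U -> 'I_w}) b c : {ffun U -> 'I_w} :=
  [ffun x => if x == b then c else h x].

Lemma updK h b c : upd (upd h b c) b (h b) = h.
Proof. by apply/ffunP => x; rewrite !ffunE; case: eqP => // ->. Qed.
Lemma upd_upd h b c d : upd (upd h b c) b d = upd h b d.
Proof. by apply/ffunP => x; rewrite !ffunE; case: eqP. Qed.
Lemma upd_same h b : upd h b (h b) = h.
Proof. by apply/ffunP => x; rewrite !ffunE; case: eqP => // ->. Qed.

Lemma coll_card (Q : U -> pred 'I_w) a b c0 : a != b -> Q b c0 ->
  (forall c, Q a c -> Q b c) ->
  let H := [set h : {ffun U -> 'I_w} | [forall x, Q x (h x)]] in
  (#|[set h in H | h a == h b]| * #|[pred c | Q b c]| = #|H|)%N.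
Proof.
move=> ab Qc0 Qab H.
have inH h : (h \in H) = [forall x, Q x (h x)] by rewrite inE.
have updH h c : h \in H -> Q b c -> upd h b c \in H.
  rewrite !inH => /forallP hH Qc; apply/forallP => x; rewrite ffunE.
  by case: eqP => [->|]; [exact: Qc | move=> _; exact: hH].
set H0 := [set h in H | h b == c0].
have e1 : #|[set h in H | h a == h b]| = #|H0|.
  apply: (@card_bij _ _ _ (fun h => upd h b c0) (fun h => upd h b (h a))).
  - move=> h /setIdP [hH /eqP hab].
    by rewrite upd_upd ffunE (negbTE ab) hab upd_same.
  - move=> h /setIdP [hH /eqP hb].
    by rewrite upd_upd -hb upd_same.
  - move=> h /setIdP [hH _]; rewrite inE updH //= ffunE eqxx //.
  - move=> h /setIdP [hH _]; rewrite inE updH //=.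
      by rewrite !ffunE (negbTE ab) eqxx.
    by apply: Qab; move: hH; rewrite inH => /forallP.
have e2 c : Q b c -> #|[set h in H | h b == c]| = #|H0|.
  move=> Qc.
  apply: (@card_bij _ _ _ (fun h => upd h b c0) (fun h => upd h b c)).
  - move=> h /setIdP [hH /eqP <-]; exact: updK.
  - move=> h /setIdP [hH /eqP <-]; exact: updK.
  - move=> h /setIdP [hH _]; rewrite inE updH //= ffunE eqxx //.
  - move=> h /setIdP [hH _]; rewrite inE updH //= ffunE eqxx //.
have e3 : #|H| = (\sum_(c | Q b c) #|[set h in H | h b == c]|)%N.
  rewrite -sum1_card (@partition_big _ _ _ _ _ _ (fun h => h \in H) (fun h : {ffun U -> 'I_w} => h b) (Q b)) /=; last first.
    by move=> h; rewrite inH => /forallP.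
  apply: eq_bigr => c _; rewrite sum1_card; apply: eq_card => h.
  by rewrite !inE -inH.
rewrite e3 (eq_bigr _ e2) sum_nat_const e1 mulnC.
congr (_ * _)%N.
Qed.
End Coll.
Lemma card_block (w off k : nat) : (off + k <= w)%N ->
  #|[pred c : 'I_w | (off <= c < off + k)%N]| = k.
Proof.
elim: k => [|k IH] hk.
  apply: eq_card0 => c /=; apply/negP => /andP [h1 h2]; lia.
have lt : (off + k < w)%N by lia.
rewrite (cardD1 (Ordinal lt)) inE /= leq_addr /= addnS ltnSn /= add1n.
rewrite -[in RHS](IH _); last lia.
congr _.+1; apply: eq_card => c; rewrite !inE -val_eqE /=.
apply/andP/andP => [[h1 /andP [h2 h3]] | [h2 h3]].
  by split => //; move/eqP: h1; lia.
by split; [apply/eqP; lia | apply/andP; split; lia].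
Qed.

Lemma exp_err_eq (U : finType) (w : nat) (f : U -> nat) (H : {set {ffun U -> 'I_w}}) e :
 exp_err f H e = \sum_(e' | e' != e) (f e')%:R * (#|[set h in H | h e' == h e]|%:R / #|H|%:R).
Proof.
rewrite /exp_err /add_err.
under eq_bigr => h _ do rewrite natr_sum big_mkcondr /=.
rewrite exchange_big mulr_sumr; apply: eq_bigr => e' _.
rewrite -big_mkcondr sumr_const.
have -> : #|[pred h | (h \in H) && (h e' == h e)]| = #|[set h in H | h e' == h e]|.
  by apply: eq_card => h; rewrite !inE.
by rewrite -mulr_natr !mul1r; ring.
Qed.

Lemma ratio (c H w : nat) : (c * w)%N = H -> (0 < H)%N -> c%:R / H%:R = (w%:R)^-1 :> rat.
Proof.
move=> <-; rewrite muln_gt0 => /andP [c0 w0].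
rewrite natrM invfM mulrA divff ?mul1r // pnatr_eq0 -lt0n //.
Qed.

Lemma CM_err (U : finType) (w : nat) (f : U -> nat) e : (0 < w)%N ->
  exp_err f (CM_hashes U w) e = \sum_(e' | e' != e) (f e')%:R * (w%:R)^-1.
Proof.
move=> hw; rewrite exp_err_eq; apply: eq_bigr => e' ne; congr (_ * _); apply: ratio.
  have := @coll_card U w (fun _ _ => true) e' e (Ordinal hw) ne isT (fun _ _ => isT).
  rewrite /=.
  have -> : ([set h | [forall x : U, true]] : {set {ffun U -> 'I_w}}) = CM_hashes U w.
    by apply/setP => h; rewrite !inE; apply/forallP.
  have -> : #|[pred: 'I_w | true]| = w by rewrite -[RHS](card_ord w); apply: eq_card.
  done.
by rewrite /CM_hashes cardsT card_ffun card_ord expn_gt0 hw.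
Qed.

Section FCM.
Variables (U : finType) (f : U -> nat) (l : nat) (g : U -> 'I_l)
  (w : nat) (wj : 'I_l -> nat).
Hypothesis hnonempty : forall j : 'I_l, exists e : U, g e = j.
Hypothesis hwj_pos : forall j, (0 < wj j)%N.
Hypothesis hwj : forall j, (wj j * #|U| = group_size g j * w)%N.

Local Notation off := (block_offset wj).

Lemma off_end j : (off j + wj j = \sum_(k < l | (k <= j)%N) wj k)%N.
Proof.
rewrite /block_offset [in RHS](bigD1 j) //= addnC; congr (_ + _).
by apply: eq_bigl => k; rewrite ltn_neqAle andbC.
Qed.

Lemma off_mono (j k : 'I_l) : (j < k)%N -> (off j + wj j <= off k)%N.
Proof.
move=> jk; rewrite off_end /block_offset big_mkcond [X in (_ <= X)%N]big_mkcond /=.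
apply: leq_sum => i _; case: ifP => h1; case: ifP => h2 //; lia.
Qed.

Lemma off_le j : (off j + wj j <= \sum_k wj k)%N.
Proof.
rewrite off_end big_mkcond /=; apply: leq_sum => i _; case: ifP => //.
Qed.

Lemma blocks_disj j k (c : 'I_w) : in_block wj j c -> in_block wj k c -> j = k.
Proof.
move=> /andP [a1 a2] /andP [b1 b2]; apply/val_inj/eqP.
case: (ltngtP j k) => // h; [have := off_mono h | have := off_mono h]; lia.
Qed.

Lemma sum_gs : (\sum_j group_size g j = #|U|)%N.
Proof.
rewrite -[RHS]sum1_card (partition_big g xpredT) //=; apply: eq_bigr => j _.
by rewrite sum1_card; apply: eq_card => e; rewrite inE.
Qed.

Lemma sum_wj : (0 < #|U|)%N -> (\sum_j wj j = w)%N.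
Proof.
move=> npos; apply/eqP; rewrite -(eqn_pmul2r npos) big_distrl /=.
under eq_bigr do rewrite hwj.
by rewrite -big_distrl /= sum_gs mulnC.
Qed.

Lemma off_lt (npos : (0 < #|U|)%N) j : (off j < w)%N.
Proof. have := off_le j; rewrite sum_wj //; have := hwj_pos j; lia. Qed.

Lemma FCM_err (npos : (0 < #|U|)%N) e :
  exp_err f (FCM_hashes w g wj) e =
  \sum_(e' | e' != e) (f e')%:R * (if g e' == g e then ((wj (g e))%:R)^-1 else 0).
Proof.
rewrite exp_err_eq; apply: eq_bigr => e' ne; congr (_ * _).
case: ifP => ge.
  apply: ratio.
    have Q0 : in_block wj (g e) (Ordinal (off_lt npos (g e))).
      by rewrite /in_block /= leqnn /= -{1}[off (g e)]addn0 ltn_add2l hwj_pos.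
    have := @coll_card U w (fun x c => in_block wj (g x) c) e' e _ ne Q0.
    rewrite (eqP ge) => /(_ (fun _ h => h)) /=.
    rewrite card_block //; have := off_le (g e); rewrite sum_wj //.
  apply/card_gt0P.
  exists [ffun x => Ordinal (off_lt npos (g x))].
  rewrite inE; apply/forallP => x; rewrite ffunE.
  by rewrite /in_block /= leqnn /= -{1}[off (g x)]addn0 ltn_add2l hwj_pos.
have -> : #|[set h in FCM_hashes w g wj | h e' == h e]| = 0%N.
  apply/eqP; rewrite cards_eq0; apply/eqP/setP => h; rewrite !inE.
  apply/negbTE/negP => /andP [/forallP hh /eqP heq].
  have := blocks_disj (hh e'); rewrite heq => /(_ _ (hh e)) gj.
  by rewrite gj eqxx in ge.
by rewrite mul0r.
Qed.
End FCM.

Lemma swap_sum (U : finType) (F : U -> U -> rat) :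
  \sum_e \sum_(e' | e' != e) F e e' = \sum_e' \sum_(e | e != e') F e e'.
Proof.
under eq_bigr do rewrite big_mkcond.
rewrite exchange_big; apply: (@eq_bigr rat 0 +%R) => e' _; rewrite [RHS]big_mkcond /=.
by apply: eq_bigr => e _; rewrite eq_sym.
Qed.

Lemma sum_cst (U : finType) (P : pred U) (x : rat) : \sum_(e | P e) x = x *+ #|P|.
Proof. by rewrite -sumr_const. Qed.

Lemma final_ineq (F nj n wjj w : nat) : (0 < F)%N -> (0 < nj)%N -> (nj < n)%N ->
  (0 < wjj)%N -> (0 < w)%N -> (wjj * n = nj * w)%N ->
  (F%:R / wjj%:R *+ nj.-1 < F%:R / w%:R *+ n.-1 :> rat).
Proof.
move=> hF h1 h2 h3 h4 h5.
have key : (nj.-1 * w < n.-1 * wjj)%N.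
  case: nj h1 h2 h5 => // a _; case: n => // b.
  rewrite !succnK => h2 h5.
  rewrite -(ltn_pmul2r (ltn0Sn b)) -[X in (_ < X)%N]mulnA h5.
  have e1 : (a * w * b.+1 = a * b * w + a * w)%N.
    by ring.
  have e2 : (b * (a.+1 * w) = a * b * w + b * w)%N.
    by ring.
  rewrite e1 e2 ltn_add2l ltn_pmul2r //.
rewrite -(mulr_natr (F%:R / wjj%:R) nj.-1) -(mulr_natr (F%:R / w%:R) n.-1) -!mulrA ltr_pM2l ?ltr0n //.
rewrite [_^-1 * _]mulrC [X in _ < X]mulrC.
rewrite ltr_pdivrMr ?ltr0n // mulrAC ltr_pdivlMr ?ltr0n // -!natrM ltr_nat.
exact: key.
Qed.

Theorem mainTheorem2 (U : finType) (f : U -> nat) (l : nat) (g : U -> 'I_l)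
  (w : nat) (wj : 'I_l -> nat)
  (hf : forall e, (0 < f e)%N)
  (hl : (2 <= l)%N)
  (hnonempty : forall j : 'I_l, exists e : U, g e = j)
  (hw : (0 < w)%N)
  (hwj_pos : forall j, (0 < wj j)%N)
  (hwj : forall j, (wj j * #|U| = group_size g j * w)%N) :
  total_loss f (FCM_hashes w g wj) < total_loss f (CM_hashes U w).
Proof.
have l0 : (0 < l)%N by lia.
have [e0 _] := hnonempty (Ordinal l0).
have npos : (0 < #|U|)%N by apply/card_gt0P; exists e0.
rewrite /total_loss.
under eq_bigr do rewrite (FCM_err f hwj_pos hwj npos).
rewrite [X in _ < X](eq_bigr _ (fun e _ => @CM_err U w f e hw)).
rewrite swap_sum [X in _ < X]swap_sum; apply: ltr_sum.
  by apply/hasP; exists e0; rewrite ?mem_index_enum.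
move=> e' _.
set j := g e'.
have -> : (\sum_(e | e != e') (f e')%:R * (if j == g e then ((wj (g e))%:R)^-1 else 0)
   = \sum_(e | e != e') (if g e == j then (f e')%:R * ((wj j)%:R)^-1 else 0) :> rat).
  apply: eq_bigr => e _; case: (eqVneq (g e) j) => [->|ne]; first by rewrite ?eqxx.
  by rewrite mulr0.
rewrite -big_mkcondr !sum_cst.
have -> : #|[pred e | (e != e') && (g e == j)]| = (group_size g j).-1.
  rewrite /group_size (cardD1 e') inE /j eqxx add1n /=.
  by apply: eq_card => e; rewrite !inE.
have -> : #|(fun e : U => e != e')| = #|U|.-1.
  by rewrite -(cardC1 e'); apply: eq_card.
have nj1 : (0 < group_size g j)%N.
  by apply/card_gt0P; exists e'; rewrite inE.
have njn : (group_size g j < #|U|)%N.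
  pose k : 'I_l := if val j == 0%N then Ordinal hl else Ordinal l0.
  have kj : k != j.
    rewrite /k; case: ifP => /eqP h; apply/negP; move=> /eqP /(congr1 val) /= hh; move: h hh; rewrite /=; lia.
  have [e1 ge1] := hnonempty k.
  rewrite -cardsT /group_size; apply: proper_card; rewrite properT.
  apply/eqP => hA; have := in_setT e1; rewrite -hA inE ge1 => /eqP kj'.
  by rewrite kj' eqxx in kj.
exact: (final_ineq (hf e') nj1 njn (hwj_pos j) hw (hwj j)).
Qed.
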